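(* Let $p\ne 2,5$ be a prime and let $\sum_{i=0}^\infty a_it^i\in\mathbb{C}_p[[t]]$ be a power series with integral coefficients ($v(a_i)\ge 0$ for all $i$). Let $f(t)=\sum_{i=0}^\infty\frac{a_i}{i+1}t^{i+1}$. If $v(a_0)=0$, then $\mathrm{New}_1(f)=\emptyset$ and $\mathrm{New}_{1/2}(f)\subset[1,3]$. If $v(a_1)=0$ or $v(a_2)=0$, then $\mathrm{New}_1(f)\subset[1,3]$ and $\mathrm{New}_{1/2}(f)\subset[1,3]$.
   Context: $\mathbb{C}_p$ is the completion of $\overline{\mathbb{Q}_p}$ with valuation $v$, $v(p)=1$, $v(0)=\infty$. For a positive rational $m$ and a power series $F(t)=\sum_{u\ge0}c_ut^u$, the Newton polygon $\mathrm{New}_m(F)\subset\mathbb{R}$ is the convex hull of the set of $u\in\mathbb{Z}_{\ge0}$ for which there exists $w\in\mathbb{Q}$ with $w\ge m$ such that $v(c_u)+wu=v(c_{u'})+wu'$ for some $u'\ne u$ and $v(c_u)+wu\le v(c_{u''})+wu''$ for all $u''\in\mathbb{Z}_{\ge0}$. *)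

(* Defs.v *)
From Stdlib Require Import Reals.
From mathcomp Require Import all_boot all_order all_algebra.
Set Implicit Arguments. Unset Strict Implicit. Unset Printing Implicit Defensive.
Import Order.TTheory GRing.Theory Num.Theory.
Local Open Scope ring_scope.

(* Extended rationals Q ∪ {+oo}: [None] stands for +oo = v(0). *)
Definition ole (a b : option rat) : bool :=
  match a, b with
  | _, None => true
  | None, Some _ => false
  | Some x, Some y => (x <= y)%R
  end.

Definition oadd (a b : option rat) : option rat :=
  match a, b with
  | Some x, Some y => Some (x + y)%R
  | _, _ => None
  end.

Definition shift (a : option rat) (w : rat) (u : nat) : option rat :=
  oadd a (Some (w * u%:R)%R).

(* v : K -> Q ∪ {+oo} is a (rank one, Q-valued) valuation normalized by
   v(p) = 1, i.e. it has the properties of the valuation of C_p used in the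
   paper: v(0) = +oo (and only 0), v(xy) = v(x) + v(y),
   v(x + y) >= min(v(x), v(y)), v(p) = 1. *)
Definition p_valuation (K : fieldType) (p : nat) (v : K -> option rat) : Prop :=
  [/\ forall x, v x = None <-> x = 0,
      forall x y, v (x * y) = oadd (v x) (v y),
      forall x y, ole (v x) (v (x + y)) || ole (v y) (v (x + y))
    & v (p%:R) = Some 1].

(* u belongs to the generating set of New_m(F), F = sum_u c_u t^u:
   there is a rational w >= m such that u realizes the minimum of
   v(c_u'') + w u'' over all u'', and this minimum is also attained at
   some u' <> u. *)
Definition in_New (K : fieldType) (v : K -> option rat) (m : rat)
    (c : nat -> K) (u : nat) : Prop :=
  exists w : rat, (m <= w)%R /\
    (exists u', u' <> u /\ shift (v (c u)) w u = shift (v (c u')) w u') /\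
    (forall u'', ole (shift (v (c u)) w u) (shift (v (c u'')) w u'')).

(* New_m(F) ⊂ R: the convex hull in R of that set of nonnegative integers
   (for a subset of R, the convex hull is the union of the segments
   joining two of its points). *)
Definition New (K : fieldType) (v : K -> option rat) (m : rat)
    (c : nat -> K) : R -> Prop :=
  fun x => exists u1 u2 : nat,
    in_New v m c u1 /\ in_New v m c u2 /\ Rle (INR u1) x /\ Rle x (INR u2).

(* coefficients of f(t) = sum_i a_i/(i+1) t^(i+1) *)
Definition antideriv_coef (K : fieldType) (a : nat -> K) (n : nat) : K :=
  match n with
  | 0%N => 0
  | i.+1 => a i / (i.+1)%:R
  end.

(* Main.v *)
Require Import Defs.
From Stdlib Require Import Reals.
From Stdlib Require Import Reals.
From mathcomp Require Import all_boot all_order all_algebra.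
From mathcomp Require Import zify ring lra.
Set Implicit Arguments. Unset Strict Implicit. Unset Printing Implicit Defensive.
Import Order.TTheory GRing.Theory Num.Theory.

Section Val.
Local Open Scope ring_scope.
Variables (K : fieldType) (p : nat) (v : K -> option rat).
Hypothesis hp : prime p.
Hypothesis hv : p_valuation p v.

Lemma v_none x : v x = None <-> x = 0. Proof. by case: hv. Qed.
Lemma v_mul x y : v (x * y) = oadd (v x) (v y). Proof. by case: hv. Qed.
Lemma v_ultra x y : ole (v x) (v (x + y)) || ole (v y) (v (x + y)). Proof. by case: hv. Qed.
Lemma v_p : v p%:R = Some 1. Proof. by case: hv. Qed.

Lemma v_1 : v 1 = Some 0.
Proof.
have := v_mul 1 1; rewrite mulr1.
case E: (v 1) => [x|]; last by move/v_none: E => /eqP; rewrite oner_eq0.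
by case=> H; congr Some; lra.
Qed.

Lemma v_m1 : v (-1) = Some 0.
Proof.
have := v_mul (-1) (-1); rewrite mulrNN mulr1 v_1.
case: (v (-1)) => [x|] //= [] H; congr Some; lra.
Qed.

Lemma ole_trans a b c : ole a b -> ole b c -> ole a c.
Proof. case: a; case: b; case: c => //= x y z; exact: le_trans. Qed.

Lemma ole_add0 a b : ole (Some 0) a -> ole (Some 0) b -> ole (Some 0) (oadd a b).
Proof. case: a; case: b => //= x y; exact: addr_ge0. Qed.

Lemma v_ge0_plus x y : ole (Some 0) (v x) -> ole (Some 0) (v y) -> ole (Some 0) (v (x + y)).
Proof. by move=> hx hy; case/orP: (v_ultra x y); apply: ole_trans. Qed.

Lemma v_nat_ge0 n : ole (Some 0) (v n%:R).
Proof.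
elim: n => [|n IH]; first by have /v_none -> : (0%:R : K) = 0 by [].
by rewrite -addn1 natrD; apply: v_ge0_plus => //; rewrite v_1.
Qed.

Definition gt0 a := ~~ ole a (Some 0).

Lemma gt0_ole a b : gt0 a -> ole a b -> gt0 b.
Proof. by case: a; case: b => //= x y; rewrite /gt0 /= => /negP H1 H2; apply/negP => H3; apply: H1; exact: le_trans H2 H3. Qed.

Lemma gt0_add a b : gt0 a -> ole (Some 0) b -> gt0 (oadd a b).
Proof. case: a; case: b => //= x y; rewrite /gt0 /= -!ltNge => H1 H2; exact: ltr_wpDr. Qed.

Lemma gt0_plus x y : gt0 (v x) -> gt0 (v y) -> gt0 (v (x + y)).
Proof. by move=> hx hy; case/orP: (v_ultra x y) => H; [exact: gt0_ole hx H|exact: gt0_ole hy H]. Qed.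

Lemma gt0_addC a b : gt0 b -> ole (Some 0) a -> gt0 (oadd a b).
Proof. by case: a; case: b => //= x y h1 h2; rewrite addrC; apply: (gt0_add (a:=Some x) (b:=Some y)). Qed.

Lemma v_coprime m : coprime p m -> (0 < m)%N -> v m%:R = Some 0.
Proof.
move=> cop m0.
case: (egcdnP p m0) => km kn E _.
rewrite gcdnC (eqP cop) in E.
have E' : (1 : K) = km%:R * m%:R + (-1) * (kn%:R * p%:R).
  by rewrite mulN1r -!natrM E natrD addrC addKr.
have hm := v_nat_ge0 m.
suff : ~~ gt0 (v m%:R).
  case: (v m%:R) hm => [x|] //= hx; rewrite /gt0 /= negbK => hx'.
  by congr Some; apply/eqP; rewrite eq_le hx hx'.
apply/negP => hg.
have : gt0 (v 1).
  rewrite E'; apply: gt0_plus.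
    rewrite v_mul; apply: gt0_addC => //; exact: v_nat_ge0.
  rewrite v_mul v_m1 v_mul v_p.
  apply: gt0_addC => //; apply: gt0_addC; first by rewrite /gt0.
  exact: v_nat_ge0.
by rewrite v_1.
Qed.

Lemma v_pow k : v (p%:R ^+ k) = Some k%:R.
Proof.
elim: k => [|k IH]; first by rewrite expr0 v_1.
by rewrite exprS v_mul IH v_p /= -addn1 natrD addrC.
Qed.

Lemma v_nat n : (0 < n)%N -> v n%:R = Some (logn p n)%:R.
Proof.
move=> n0; case: (pfactor_coprime hp n0) => m cop E.
have m0 : (0 < m)%N by move: n0; rewrite {1}E muln_gt0 => /andP[].
by rewrite {1}E natrM natrX v_mul v_coprime // v_pow /= add0r.
Qed.

Lemma v_inv x : x != 0 -> v x^-1 = omap (fun t => - t) (v x).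
Proof.
move=> x0; have := v_mul x x^-1; rewrite mulfV // v_1.
case: (v x) => [y|]; case: (v x^-1) => [z|] //= [] H; congr Some; lra.
Qed.

Lemma v_f a (i : nat) : v (antideriv_coef a i.+1) =
  oadd (v (a i)) (Some (- (logn p i.+1)%:R)).
Proof.
rewrite /= v_mul v_inv ?v_nat //.
apply/negP => /eqP /v_none; rewrite v_nat //.
Qed.

End Val.
Lemma pow3a k : (1 <= k -> k + 2 <= 3 ^ k)%N.
Proof. elim: k => [//|k IH] _; case: k IH => [//|k] IH; rewrite expnS; lia. Qed.
Lemma pow3b k : (2 <= k -> 2 * k + 4 <= 3 ^ k)%N.
Proof. elim: k => [//|k IH] H; case: k IH H => [//|[//|k]] IH _; rewrite expnS; move: IH; rewrite expnS; lia. Qed.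
Lemma natfacts p u : prime p -> p <> 2%N -> (0 < u)%N ->
  let k := logn p u in
  [/\ (2 <= u -> k + 2 <= u)%N, (4 <= u -> 2 * k + 3 <= u)%N,
      (p = 3 -> 4 <= u -> 2 * k + 2 <= u)%N &
      (p <> 3 -> p <> 5 -> 4 <= u -> 2 * k + 4 <= u)%N].
Proof.
move=> hp hp2 u0 k.
have p1 := prime_gt1 hp.
have p4 : p != 4 by apply: contraTneq hp => ->.
have p6 : p != 6 by apply: contraTneq hp => ->.
have dv : (p ^ k %| u)%N := pfactor_dvdnn p u.
have le : (p ^ k <= u)%N := dvdn_leq u0 dv.
clearbody k; case: k dv le => [|[|j]] dv le.
- split; lia.
- rewrite expn1 in dv le.
  case/dvdnP: dv => q Eq.
  split; try lia.
  move=> h4; case: q Eq => [|[|q]] Eq; lia.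
- have le3 : (3 ^ j.+2 <= p ^ j.+2)%N by rewrite leq_exp2r; lia.
  have := pow3b (k := j.+2) isT. have := pow3a (k := j.+2) isT.
  split; try lia.
Qed.
Lemma ratineq (m w U Kq y r x : rat) : (0 < m -> m <= w -> r <= U -> 0 <= x ->
  Kq + y < m * (U - r) -> y + w * r < x + - Kq + w * U)%R.
Proof. move=> h0 h1 h2 h3 h4. have : (m * (U - r) <= w * (U - r))%R by nra. lra. Qed.

Section Main.
Local Open Scope ring_scope.
Variables (K : fieldType) (p : nat) (v : K -> option rat).
Hypothesis hp : prime p.
Hypothesis hp2 : p <> 2%N.
Hypothesis hp5 : p <> 5%N.
Hypothesis hv : p_valuation p v.
Variables (a : nat -> K).
Hypothesis ha : forall i, ole (Some 0%R) (v (a i)).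
Let f := antideriv_coef a.

Lemma ole_refl b : ole b b.
Proof. by case: b => //= x; exact: lexx. Qed.

Lemma strict_u w r y u : v (f r) = Some y -> (0 < u)%N ->
  (forall x : rat, 0 <= x -> y + w * r%:R < x + - (logn p u)%:R + w * u%:R) ->
  ~~ ole (shift (v (f u)) w u) (shift (v (f r)) w r).
Proof.
move=> Hr; case: u => // i _ H; rewrite /f (v_f hp hv) // Hr /shift.
have := ha i; case: (v (a i)) => [x|] //= hx.
by rewrite -ltNge; apply: H.
Qed.

Lemma vf0 : v (f 0) = None.
Proof. by apply/(v_none hv). Qed.

Lemma in_bound (m : rat) i : 1/2 <= m -> (i <= 2)%N -> v (a i) = Some 0 ->
  (forall (w : rat) u, 1/2 <= w -> (4 <= u)%N -> forall x : rat, 0 <= x ->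
     (0 + - (logn p i.+1)%:R) + w * i.+1%:R < x + - (logn p u)%:R + w * u%:R) ->
  forall u, in_New v m f u -> (1 <= u <= 3)%N.
Proof.
move=> hm hi hai Hnum u [w [hw [_ hmin]]].
have Hr : v (f i.+1) = Some (0 + - (logn p i.+1)%:R) by rewrite /f (v_f hp hv) // hai.
have := hmin i.+1; clear hmin.
case: u => [|u]; first by rewrite vf0 Hr.
case: (leqP 4 u.+1) => hu; last by move=> _; apply/andP; split => //; rewrite -ltnS.
move=> H; exfalso; move: H; apply/negP.
apply: strict_u Hr _ _ => //.
apply: Hnum => //; exact: le_trans hw.
Qed.

Lemma emptyA : v (a 0) = Some 0 -> forall u, ~ in_New v 1 f u.
Proof.
move=> h0.
have Hr : v (f 1) = Some (0 + - (logn p 1)%:R) by rewrite /f (v_f hp hv) // h0.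
have St : forall w t, 1 <= w -> t <> 1%N -> ~~ ole (shift (v (f t)) w t) (shift (v (f 1)) w 1).
  move=> w t hw ht.
  case: t ht => [|t] ht; first by rewrite vf0 Hr.
  apply: strict_u Hr _ _ => // x hx.
  case: (@natfacts p t.+1 hp hp2 isT) => hA _ _ _.
  have ht2 : (2 <= t.+1)%N by case: t ht {hA}.
  have := hA ht2; rewrite -(ler_nat rat) natrD => hk.
  apply: (ratineq (m := 1)) => //; rewrite ?ler_nat //.
  rewrite logn1; lra.
move=> u [w [hw [[u' [hu' heq]] hmin]]].
have [hu1e|hu1] := eqVneq u 1%N.
  subst u.
  have := St w u' hw hu'; rewrite -heq.
  by rewrite ole_refl.
have := St w u hw (elimN eqP hu1).
by rewrite hmin.
Qed.

Lemma Hnum i : (i <= 2)%N -> (forall (w : rat) u, 1/2 <= w -> (4 <= u)%N -> forall x : rat, 0 <= x ->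
     (0 + - (logn p i.+1)%:R) + w * i.+1%:R < x + - (logn p u)%:R + w * u%:R).
Proof.
move=> hi w u hw hu x hx.
have u0 : (0 < u)%N by apply: leq_trans hu.
case: (@natfacts p u hp hp2 u0) => _ hC hD3 hD7.
apply: (ratineq (m := 1/2)) => //; first by rewrite ?ler_nat; lia.
case: i hi => [|[|[|//]]] _.
- have := hC hu; rewrite -(ler_nat rat) natrD natrM => hk.
  rewrite logn1; lra.
- have := hC hu; rewrite -(ler_nat rat) natrD natrM => hk.
  have -> : logn p 2 = 0%N by rewrite (logn_prime _ (isT : prime 2)); case: eqP.
  lra.
- have [e3|n3] := eqVneq p 3%N.
    have := hD3 e3 hu; rewrite -(ler_nat rat) natrD natrM => hk.
    have -> : logn p 3 = 1%N by rewrite (logn_prime _ (isT : prime 3)) e3.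
    lra.
  have := hD7 (elimN eqP n3) hp5 hu; rewrite -(ler_nat rat) natrD natrM => hk.
  have -> : logn p 3 = 0%N by rewrite (logn_prime _ (isT : prime 3)) (negbTE n3).
  lra.
Qed.

End Main.

Lemma New_conc (K : fieldType) (v : K -> option rat) m f :
  (forall u, in_New v m f u -> (1 <= u <= 3)%N) ->
  forall x : R, New v m f x -> Rle (INR 1) x /\ Rle x (INR 3).
Proof.
move=> H x [u1 [u2 [h1 [h2 [h3 h4]]]]].
case/andP: (H _ h1) => a1 _; case/andP: (H _ h2) => _ b2.
split.
  eapply Rle_trans; [|exact h3]; apply le_INR; apply/ssrnat.leP; exact a1.
eapply Rle_trans; [exact h4|]; apply le_INR; apply/ssrnat.leP; exact b2.
Qed.


Theorem lemma6p2 (K : closedFieldType) (p : nat) (v : K -> option rat)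
  (hp : prime p) (hp2 : p <> 2%N) (hp5 : p <> 5%N)
  (hv : p_valuation p v)
  (a : nat -> K) (ha : forall i, ole (Some 0%R) (v (a i))) :
  let f := antideriv_coef a in
  (v (a 0%N) = Some 0%R ->
     (forall x : R, ~ New v 1%R f x) /\
     (forall x : R, New v (1 / 2)%R f x -> Rle (INR 1) x /\ Rle x (INR 3))) /\
  (v (a 1%N) = Some 0%R \/ v (a 2%N) = Some 0%R ->
     (forall x : R, New v 1%R f x -> Rle (INR 1) x /\ Rle x (INR 3)) /\
     (forall x : R, New v (1 / 2)%R f x -> Rle (INR 1) x /\ Rle x (INR 3))).
Proof.
move=> f; split.
  move=> h0; split.
    by move=> x [u1 [u2 [h1 _]]]; exact: (emptyA hp hp2 hv ha h0 h1).
  apply: New_conc => u.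
  apply: (in_bound hp hv ha (i:=0)) => //.
  exact: (Hnum hp hp2 hp5).
move=> H.
have key : forall m : rat, (1/2 <= m)%R -> forall u, in_New v m f u -> (1 <= u <= 3)%N.
  move=> m hm u; case: H => [h|h].
  - apply: (in_bound hp hv ha (i:=1)) => //; exact: (Hnum hp hp2 hp5).
  - apply: (in_bound hp hv ha (i:=2)) => //; exact: (Hnum hp hp2 hp5).
split; apply: New_conc; apply: key => //.
Qed.
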